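(* Let $E$ be a topological space and $C:E\to 2^E$ a constraint function. Let $\mathcal{U}$ and $\mathcal{V}$ be collections of subsets of $E$ such that $\mathcal{U}$ is a refinement of $\mathcal{V}$, i.e. each $U\in\mathcal{U}$ is a subset of some $V\in\mathcal{V}$. Then this induces an order preserving function $TP_C(\mathcal{U})\to TP_C(\mathcal{V})$: namely, for any function $\phi:\mathcal{U}\to\mathcal{V}$ with $A\subseteq\phi(A)$ for all $A\in\mathcal{U}$, the assignment $[A]\mapsto[\phi(A)]$ is a well-defined order preserving map $TP_C(\mathcal{U})\to TP_C(\mathcal{V})$.
   Context: A set-valued function $C:E\to 2^E$ on a topological space $E$ is a constraint function if $x\in C(x)$ for all $x\in E$ and $C$ is lower semicontinuous: for every open $U\subseteq E$ the set $\{x\in E: C(x)\cap U\neq\emptyset\}$ is open. For $U\subseteq E$ write $C(U)=\bigcup_{x\in U}C(x)$. For subsets $A,B\subseteq E$ write $A\prec B$ if for every open set $U$ containing $A$, $C(U)\cap B\neq\emptyset$. Given a collection $\mathcal{U}$ of subsets of $E$, the constraint graph $TG_C(\mathcal{U})$ is the directed graph with vertex set $\mathcal{U}$ and an edge $(A,B)$ whenever $A\prec B$. The tracklet poset $TP_C(\mathcal{U})$ is the set of equivalence classes $[A]$ of the preorder given by the transitive closure of the edge relation of $TG_C(\mathcal{U})$ (where $A,B$ are equivalent if each precedes the other in the transitive closure), ordered by $[A]\le[B]$ iff $A$ precedes $B$ in the transitive closure. *)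

(* Defs.v *)
From HB Require Import structures.
From mathcomp Require Import all_boot all_order.
From mathcomp Require Import all_classical topology.
From Stdlib Require Import Relations.
Set Implicit Arguments. Unset Strict Implicit. Unset Printing Implicit Defensive.
Local Open Scope classical_set_scope.

(* C : E -> 2^E is a constraint function: x \in C x, and C is lower
   semicontinuous. *)
Definition constraint_function (E : topologicalType) (C : E -> set E) : Prop :=
  (forall x, C x x) /\
  (forall U : set E, open U -> open [set x | C x `&` U !=set0]).

Definition Cimg (E : topologicalType) (C : E -> set E) (U : set E) : set E :=
  \bigcup_(x in U) C x.

Definition prec (E : topologicalType) (C : E -> set E) (A B : set E) : Prop :=
  forall U : set E, open U -> A `<=` U -> Cimg C U `&` B !=set0.

Definition tg_edge (E : topologicalType) (C : E -> set E) (Us : set (set E))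
  (A B : set E) : Prop := Us A /\ Us B /\ prec C A B.

(* the preorder of TP_C(Us): (reflexive-)transitive closure of the edges;
   only used on members of Us *)
Definition tp_le (E : topologicalType) (C : E -> set E) (Us : set (set E))
  (A B : set E) : Prop := clos_refl_trans (set E) (tg_edge C Us) A B.

Definition tp_equiv (E : topologicalType) (C : E -> set E) (Us : set (set E))
  (A B : set E) : Prop := tp_le C Us A B /\ tp_le C Us B A.

(* Main.v *)
Require Import Defs.
From mathcomp Require Import all_boot all_order.
From mathcomp Require Import all_classical topology.
From Stdlib Require Import Relations.
Local Open Scope classical_set_scope.

Theorem proposition1 (E : topologicalType) (C : E -> set E)
  (Us Vs : set (set E)) :
  constraint_function C ->
  (forall A, Us A -> exists2 V, Vs V & A `<=` V) ->
  forall phi : set E -> set E,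
    (forall A, Us A -> Vs (phi A)) ->
    (forall A, Us A -> A `<=` phi A) ->
    (* well defined on equivalence classes *)
    (forall A B, Us A -> Us B -> tp_equiv C Us A B ->
       tp_equiv C Vs (phi A) (phi B)) /\
    (* order preserving *)
    (forall A B, Us A -> Us B -> tp_le C Us A B ->
       tp_le C Vs (phi A) (phi B)).
Proof.
move=> _ _ phi hV hsub.
have key : forall A B, tp_le C Us A B -> tp_le C Vs (phi A) (phi B).
  move=> A B; rewrite /tp_le => h; induction h as [x y [ux [uy p]]|x|x y z _ IH1 _ IH2].
  - apply: rt_step; split; [exact: hV|split; [exact: hV|]].
    move=> U oU sU; have [z [hz1 hz2]] := p U oU (subset_trans (hsub x ux) sU).
    by exists z; split => //; apply: hsub.
  - exact: rt_refl.
  - exact: rt_trans IH1 IH2.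
split.
- by move=> A B _ _ [h1 h2]; split; apply: key.
- by move=> A B _ _; apply: key.
Qed.
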